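(* In the setting below, suppose $p\geq5$. Then for all distinct $i,j,k\in\mathbb Z/N\mathbb Z$ we have $\#(P_{ij}\cap P_{jk})\geq2$.
   Context: Setting: $p,q$ distinct primes, $N=p+q$; $M=(m_{ik})_{i,k\in\mathbb Z/N\mathbb Z}$ has entries in $\mathbb Z/pq\mathbb Z$ and $(e^{2\pi i\,m_{ik}/pq})$ is a complex Hadamard matrix (unimodular entries, orthogonal rows). $L_i(k)=m_{ik}$, $L_{ij}=L_j-L_i$. For $d\mid pq$, $d(\mathbb Z/pq\mathbb Z)$ is the subgroup of multiples of $d$. For distinct $i,j$ there is a partition $\mathbb Z/N\mathbb Z=P_{ij}\sqcup Q_{ij}\sqcup R_{ij}$ and $r\in\mathbb Z/pq\mathbb Z$ with: $\#R_{ij}=2$ and $L_{ij}\equiv r$ on $R_{ij}$; $\#P_{ij}=p-1$ and $L_{ij}(P_{ij})=(r+q(\mathbb Z/pq\mathbb Z))\setminus\{r\}$; $\#Q_{ij}=q-1$ and $L_{ij}(Q_{ij})=(r+p(\mathbb Z/pq\mathbb Z))\setminus\{r\}$. This partition is unique ($R_{ij}$ is the pair of indices where $L_{ij}$ takes its unique repeated value). Put $P^+_{ij}=P_{ij}\cup R_{ij}$, $Q^+_{ij}=Q_{ij}\cup R_{ij}$. *)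

(* Defs.v *)
From HB Require Import structures.
From mathcomp Require Import all_boot all_order all_algebra all_field.
Set Implicit Arguments. Unset Strict Implicit. Unset Printing Implicit Defensive.
Import Order.TTheory GRing.Theory Num.Theory.
Local Open Scope ring_scope.

(* Indices Z/NZ with N = p + q are represented by 'I_(p+q); entries of M live
   in 'Z_(p*q) (p*q >= 6, so 'Z_(p*q) really is Z/pqZ). *)

Definition multiples (n d : nat) : {set 'Z_n} :=
  [set (d%:R * y) | y in 'Z_n].

(* (e^{2 pi i m_ik / pq}) is a complex Hadamard matrix, where z plays the role
   of exp(2 pi i / pq): a primitive pq-th root of unity in algC.  Entries are
   z^(m_ik) (automatically unimodular); rows are pairwise orthogonal for the
   standard Hermitian inner product. *)
Definition hadamard_log (n N : nat) (z : algC) (M : 'M['Z_n]_N) : Prop :=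
  forall i i' : 'I_N, i != i' ->
    \sum_(k < N) z ^+ (M i k : nat) * (z ^+ (M i' k : nat))^* = 0.

Definition Ldiff (n N : nat) (M : 'M['Z_n]_N) (i j : 'I_N) (k : 'I_N) : 'Z_n :=
  M j k - M i k.

Definition PQR_partition (p q : nat) (M : 'M['Z_(p * q)]_(p + q)) (i j : 'I_(p + q))
    (P Q R : {set 'I_(p + q)}) (r : 'Z_(p * q)) : Prop :=
  (P :|: Q :|: R = setT /\ [disjoint P & Q] /\ [disjoint P & R] /\ [disjoint Q & R]) /\
  (#|R| = 2%N /\ (forall k, k \in R -> Ldiff M i j k = r)) /\
  (#|P| = p.-1 /\ [set Ldiff M i j k | k in P] = [set r + x | x in multiples (p * q) q] :\ r) /\
  (#|Q| = q.-1 /\ [set Ldiff M i j k | k in Q] = [set r + x | x in multiples (p * q) p] :\ r).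

(* Main.v *)
Require Import Defs.
From HB Require Import structures.
From mathcomp Require Import all_boot all_order all_algebra all_field.
From mathcomp Require Import zify ring lra.
Set Implicit Arguments. Unset Strict Implicit. Unset Printing Implicit Defensive.
Import Order.TTheory GRing.Theory Num.Theory.
Local Open Scope ring_scope.

Lemma geom_sum (w : algC) (m : nat) : w ^+ m = 1 ->
  \sum_(t < m) w ^+ t = (w == 1)%:R * m%:R.
Proof.
move=> wm; have [->|w1] := eqVneq w 1.
  by rewrite mul1r (eq_bigr (fun _ => 1)) ?sumr_const ?card_ord // => t _; rewrite expr1n.
rewrite mul0r; apply/eqP; have : (w - 1) * \sum_(t < m) w ^+ t == 0.
  by rewrite -subrX1 wm subrr.
by rewrite mulf_eq0 subr_eq0 (negbTE w1).
Qed.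

Lemma sum_dvd_reindex (d m : nat) (F : nat -> algC) : (0 < d)%N ->
  \sum_(k < d * m) (d %| k)%N%:R * F k = \sum_(t < m) F (d * t)%N.
Proof.
move=> d0; rewrite -(big_mkord (fun _ => true) (fun k => (d %| k)%N%:R * F k)) -(big_mkord (fun _ => true) (fun t => F (d * t)%N)).
elim: m => [|m IH]; first by rewrite muln0 !big_geq.
rewrite big_nat_recr //= -IH mulnS addnC (big_cat_nat _ (leq_addr _ _)) //=.
congr (_ + _); rewrite big_ltn ?ltn_add2l //.
rewrite dvdn_mulr // mul1r big1_seq ?addr0 //.
move=> k /andP [_]; rewrite mem_index_iota => /andP [h1 h2].
case: (boolP (d %| k)%N) => [/dvdnP [c ck]|]; last by rewrite mul0r.
exfalso; subst k; move: h1 h2; rewrite (mulnC c d) -mulnSr !ltn_pmul2l //; lia.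
by rewrite -addn1 leq_add2l.
Qed.

Lemma sum_dvd_pow (z : algC) (n d m g : nat) : n = (d * m)%N -> (0 < d)%N ->
  n.-primitive_root z ->
  \sum_(k < n) (d %| k)%N%:R * z ^+ (k * g) = (m %| g)%N%:R * m%:R.
Proof.
move=> -> d0 hz; rewrite (@sum_dvd_reindex d m (fun k => z ^+ (k * g))) //.
have m0 : (0 < m)%N by move: (prim_order_gt0 hz); rewrite muln_gt0 => /andP[].
rewrite (eq_bigr (fun t : 'I_m => (z ^+ (d * g)) ^+ t)); last first.
  by move=> t _; rewrite -exprM; congr (_ ^+ _); rewrite mulnAC.
rewrite geom_sum; last by rewrite -exprM -mulnA (mulnC g) mulnA exprM (prim_expr_order hz) expr1n.
by rewrite -(prim_order_dvd hz) dvdn_pmul2l.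
Qed.

Lemma ramanujan (p q : nat) (z : algC) (g : nat) : prime p -> prime q -> p != q ->
  (p * q)%N.-primitive_root z ->
  \sum_(k < p * q) (coprime k (p * q))%:R * z ^+ (k * g) =
   (p * q %| g)%N%:R * (p * q)%N%:R - (q %| g)%N%:R * q%:R - (p %| g)%N%:R * p%:R + 1.
Proof.
move=> pp pq hpq hz.
have p0 := prime_gt0 pp; have q0 := prime_gt0 pq.
have E : forall k : 'I_(p * q), (coprime k (p * q))%:R * z ^+ (k * g) =
   z ^+ (k * g) - (p %| k)%N%:R * z ^+ (k * g) - (q %| k)%N%:R * z ^+ (k * g)
   + (k == 0%N :> nat)%:R * z ^+ (k * g).
  have cpq : coprime p q by rewrite prime_coprime // dvdn_prime2.
  move=> k; rewrite coprimeMr ![coprime k _]coprime_sym !prime_coprime //.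
  have -> : (k == 0%N :> nat) = (p %| k)%N && (q %| k)%N.
    rewrite -Gauss_dvd //.
    apply/eqP/idP => [->|]; first by rewrite dvdn0.
    move=> h; case: (posnP k) => // kp; exfalso.
    by move: (dvdn_leq kp h); rewrite leqNgt ltn_ord.
  by case: (p %| k)%N; case: (q %| k)%N; rewrite /= ?mul1r ?mul0r ?subr0 ?addr0 ?subrr ?sub0r ?add0r //; ring.
rewrite (eq_bigr _ (fun k _ => E k)) big_split /= !sumrB.
have n0 : (0 < p * q)%N by rewrite muln_gt0 p0.
rewrite (@sum_dvd_pow z (p * q) p q g) // (@sum_dvd_pow z (p * q) q p g (mulnC p q)) //.
have S0 : \sum_(i < p * q) (i == 0%N :> nat)%:R * z ^+ (i * g) = 1.
  rewrite (bigD1 (Ordinal n0)) //= mul1r mul0n expr0 big1 ?addr0 //.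
  move=> k /eqP kn; case: (@eqP nat k 0%N) => [h|]; last by move=> _; rewrite mul0r.
  by exfalso; apply: kn; apply: val_inj.
rewrite S0.
rewrite (eq_bigr (fun k : 'I_(p * q) => (z ^+ g) ^+ k)); last by move=> k _; rewrite -exprM mulnC.
rewrite geom_sum; last by rewrite -exprM mulnC exprM (prim_expr_order hz) expr1n.
by rewrite (prim_order_dvd hz).
Qed.

Lemma van_aut (n N : nat) (z : algC) (f : 'I_N -> nat) (h : nat) :
  n.-primitive_root z -> \sum_(x < N) z ^+ (f x) = 0 ->
  \sum_(x < N) \sum_(k < n) (coprime k n)%:R * z ^+ (k * (f x + h)) = 0.
Proof.
move=> hz hs; rewrite exchange_big /= big1 // => k _.
case: (boolP (coprime k n)) => ck; last by rewrite big1 // => x _; rewrite mul0r.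
have [u hu] := Qn_aut_exists ck.
have uz : u z = z ^+ k by apply: hu; apply: prim_expr_order.
rewrite (eq_bigr (fun x => z ^+ (k * h) * u (z ^+ f x))); last first.
  by move=> x _; rewrite mul1r rmorphXn /= uz -!exprM -exprD mulnDr addnC.
by rewrite -mulr_sumr -rmorph_sum hs rmorph0 mulr0.
Qed.

Lemma dvd_shift (n d f g : nat) : (0 < n)%N -> (d %| n)%N ->
  (d %| f + (n - g %% n))%N = (f == g %[mod d]).
Proof.
move=> n0 /dvdnP [c nc].
rewrite /dvdn -(mod0n d) -(eqn_modDr (g %% n)) -addnA subnK; last by apply: ltnW; rewrite ltn_pmod.
rewrite add0n modn_dvdm; last by rewrite nc dvdn_mull.
by rewrite nc addnC modnMDl.
Qed.

Lemma sum_ind_card (N : nat) (P : pred 'I_N) :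
  (\sum_(x < N) (P x : nat))%N = #|[set x | P x]|.
Proof.
rewrite -sum1_card [RHS]big_mkcond /=; apply: eq_bigr => x _; rewrite inE; by case: (P x).
Qed.

Lemma sum_ind_cardR (N : nat) (P : pred 'I_N) (c : algC) :
  \sum_(x < N) (P x)%:R * c = #|[set x | P x]|%:R * c.
Proof. by rewrite -mulr_suml -natr_sum sum_ind_card. Qed.

Lemma count_id (p q : nat) (z : algC) (N : nat) (f : 'I_N -> nat) (g : nat) :
  prime p -> prime q -> p != q -> (p * q)%N.-primitive_root z ->
  \sum_(x < N) z ^+ (f x) = 0 ->
  ((p * q) * #|[set x | f x == g %[mod p * q]]| + N =
    q * #|[set x | f x == g %[mod q]]| + p * #|[set x | f x == g %[mod p]]|)%N.
Proof.
move=> pp pq hpq hz hs.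
have n0 : (0 < p * q)%N by rewrite muln_gt0 !prime_gt0.
have := van_aut (p * q - g %% (p * q)) hz hs.
rewrite (eq_bigr (fun x => ((f x == g %[mod p * q])%:R * (p * q)%N%:R
   - (f x == g %[mod q])%:R * q%:R - (f x == g %[mod p])%:R * p%:R + 1))); last first.
  move=> x _; rewrite ramanujan // !dvd_shift //; by [apply: dvdn_mulr | apply: dvdn_mull].
rewrite big_split /= !sumrB !sum_ind_cardR sumr_const card_ord => H.
apply/eqP; rewrite -(@eqr_nat algC) !natrD !natrM -subr_eq0; apply/eqP; rewrite -H; ring.
Qed.

Lemma one_big (m c : nat) (C : nat -> nat) : (0 < c)%N ->
  (\sum_(g < m) C g = m + c)%N ->
  (forall g, (g < m)%N -> (0 < C g)%N /\ (c %| C g - 1)%N) ->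
  exists2 g0, (g0 < m)%N & (C g0 = c + 1 /\ forall g, (g < m)%N -> g != g0 -> C g = 1)%N.
Proof.
move=> c0 hs hC.
case: (pickP (fun g : 'I_m => 1 < C g)%N) => [g0 hg0|hn]; last first.
  exfalso; have : (\sum_(g < m) C g <= \sum_(g < m) 1)%N.
    by apply: leq_sum => g _; move: (hn g) => /= /negbT; rewrite -leqNgt.
  by rewrite hs sum1_card card_ord; lia.
exists g0 => //.
have [_ dv] := hC g0 (ltn_ord g0).
have cle : (c <= C g0 - 1)%N by apply: dvdn_leq => //; lia.
move: hs; rewrite (bigD1 g0) //= => hs.
have hrest : (\sum_(g < m | g != g0) C g = \sum_(g < m | g != g0) (C g - 1) + (m - 1))%N.
  have c1 : (\sum_(g < m | g != g0) 1 = m - 1)%N.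
    rewrite sum1dep_card (_ : [set x | x != g0] = [set x in predC1 g0]); last by apply/setP => x; rewrite !inE.
    by rewrite cardsE cardC1 card_ord; lia.
  rewrite -c1 -big_split /=.
  apply: eq_bigr => g _; have [h1 _] := hC g (ltn_ord g); lia.
have mpos : (0 < m)%N by apply: leq_ltn_trans (ltn_ord g0).
rewrite hrest in hs.
have hz : (\sum_(g < m | g != g0) (C g - 1) = 0)%N by lia.
split; first by lia.
move=> g gm gne; move/eqP: hz; rewrite sum_nat_eq0 => /forallP /(_ (Ordinal gm)) /=.
have -> : (Ordinal gm != g0) by apply: contra gne => /eqP <-.
have [h1 _] := hC g gm; move=> /eqP; lia.
Qed.

Lemma mod_step (p q D A B : nat) : prime p -> prime q -> p != q ->
  (p * q * D + (p + q) = q * B + p * A)%N -> (0 < A)%N /\ (q %| A - 1)%N.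
Proof.
move=> pp pq hpq E.
have cqp : coprime q p by rewrite prime_coprime // dvdn_prime2 // eq_sym.
have M : (p * A == p %[mod q])%N.
  have : ((q * B + p * A) %% q = (p * q * D + q + p) %% q)%N.
    have -> : (p * q * D + q + p = p * q * D + (p + q))%N by lia.
    by rewrite E.
  rewrite (mulnC q B) modnMDl (_ : p * q * D + q + p = (p * D + 1) * q + p)%N; last by nia.
  by rewrite modnMDl => ->.
case: (posnP A) => [A0|Apos].
  exfalso; have : (q %| p)%N by rewrite /dvdn; move: M; rewrite A0 muln0 mod0n eq_sym.
  by rewrite dvdn_prime2 // eq_sym (negbTE hpq).
split => //; move: M; rewrite eqn_mod_dvd; last by rewrite leq_pmulr.
by rewrite -{2}(muln1 p) -mulnBr Gauss_dvdr.
Qed.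

Lemma sum_res (p N : nat) (f : 'I_N -> nat) : (0 < p)%N ->
  (\sum_(g < p) #|[set x | f x == g %[mod p]]| = N)%N.
Proof.
move=> p0.
rewrite (eq_bigr (fun g : 'I_p => \sum_(x < N) (f x == g %[mod p]) : nat)%N); last first.
  by move=> g _; rewrite sum_ind_card.
rewrite exchange_big /= -[RHS]card_ord -sum1_card; apply: eq_bigr => x _.
have fp : (f x %% p < p)%N by rewrite ltn_pmod.
rewrite (bigD1 (Ordinal fp)) //= modn_mod eqxx big1 // => g /eqP gne.
case: eqP => // h; exfalso; apply: gne; apply: val_inj => /=; rewrite h modn_small //.
Qed.

Lemma card_mod_eq (N p a : nat) (f : 'I_N -> nat) :
  #|[set x | f x == a %[mod p]]| = #|[set x | f x == a %% p %[mod p]]|.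
Proof. by apply: eq_card => x; rewrite !inE modn_mod. Qed.

Lemma structure (p q N : nat) (z : algC) (f : 'I_N -> nat) :
  prime p -> prime q -> p != q -> (p * q)%N.-primitive_root z -> N = (p + q)%N ->
  \sum_(x < N) z ^+ (f x) = 0 ->
  exists a0 b0 : nat,
  (forall a, #|[set x | f x == a %[mod p]]| = 1 + q * (a == a0 %[mod p]))%N /\
  (forall a b, #|[set x | (f x == a %[mod p]) && (f x == b %[mod q])]| =
     (a == a0 %[mod p]) + (b == b0 %[mod q]))%N.
Proof.
move=> pp pq hpq hz hN hs; subst N.
have p0 := prime_gt0 pp; have q0 := prime_gt0 pq.
have ID := fun g => count_id g pp pq hpq hz hs.
have cpq : coprime p q by rewrite prime_coprime // dvdn_prime2.
have [a0 a0p [Ca0 Cg]] : exists2 g0, (g0 < p)%N & (#|[set x | f x == g0 %[mod p]]| = q + 1 /\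
    forall g, (g < p)%N -> g != g0 -> #|[set x | f x == g %[mod p]]| = 1)%N.
  apply: (@one_big p q (fun g => #|[set x | f x == g %[mod p]]|)) => //.
    by rewrite sum_res.
  move=> g _; apply: (@mod_step p q #|[set x | f x == g %[mod p * q]]| _ #|[set x | f x == g %[mod q]]|) => //.
have [b0 b0q [Cb0 Cg']] : exists2 g0, (g0 < q)%N & (#|[set x | f x == g0 %[mod q]]| = p + 1 /\
    forall g, (g < q)%N -> g != g0 -> #|[set x | f x == g %[mod q]]| = 1)%N.
  apply: (@one_big q p (fun g => #|[set x | f x == g %[mod q]]|)) => //.
    by rewrite sum_res // addnC.
  move=> g _; apply: (@mod_step q p #|[set x | f x == g %[mod p * q]]| _ #|[set x | f x == g %[mod p]]|) => //.
    by rewrite eq_sym.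
  by have := ID g; rewrite (mulnC q p) (addnC q p) [in RHS]addnC.
have Hp : forall a, (#|[set x | f x == a %[mod p]]| = 1 + q * (a == a0 %[mod p]))%N.
  move=> a; rewrite card_mod_eq (modn_small a0p).
  case: (eqVneq (a %% p)%N a0) => [->|ne]; first by rewrite Ca0; lia.
  by rewrite Cg ?ltn_pmod //; lia.
have Hq : forall b, (#|[set x | f x == b %[mod q]]| = 1 + p * (b == b0 %[mod q]))%N.
  move=> b; rewrite card_mod_eq (modn_small b0q).
  case: (eqVneq (b %% q)%N b0) => [->|ne]; first by rewrite Cb0; lia.
  by rewrite Cg' ?ltn_pmod //; lia.
exists a0, b0; split => // a b.
set g := chinese p q a b.
have E : [set x | (f x == a %[mod p]) && (f x == b %[mod q])] = [set x | f x == g %[mod p * q]].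
  by apply/setP => x; rewrite !inE chinese_remainder // /g chinese_modl // chinese_modr.
have ga : (g == a0 %[mod p]) = (a == a0 %[mod p]) by rewrite /g chinese_modl.
have gb : (g == b0 %[mod q]) = (b == b0 %[mod q]) by rewrite /g chinese_modr.
have := ID g; rewrite Hp Hq ga gb -E => H.
have pq0 : (0 < p * q)%N by rewrite muln_gt0 p0 q0.
move: H; set X := #|_|; set e1 := nat_of_bool _; set e2 := nat_of_bool _.
have -> : (q * (1 + p * e1) + p * (1 + q * e2) = p * q * (e2 + e1) + (p + q))%N by ring.
by move/addIn/eqP; rewrite eqn_pmul2l // => /eqP.
Qed.

Lemma modn_cancel (p q a b : nat) : coprime p q ->
  (q * a == q * b %[mod p])%N = (a == b %[mod p])%N.
Proof.
move=> cpq; wlog le_ba : a b / (b <= a)%N.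
  move=> W; case: (leqP b a) => h; first exact: W.
  by rewrite eq_sym [in RHS]eq_sym; apply: W; apply: ltnW.
by rewrite !eqn_mod_dvd ?leq_mul2l ?le_ba ?orbT // -mulnBr Gauss_dvdr.
Qed.

Lemma expZ_add (n : nat) (z : algC) (u v : 'Z_n) : (1 < n)%N -> n.-primitive_root z ->
  z ^+ (nat_of_ord (u + v)%R) = z ^+ u * z ^+ v.
Proof.
move=> n1 hz; rewrite -exprD -[RHS](prim_expr_mod hz); congr (_ ^+ _).
change ((((u : nat) + v) %% (Zp_trunc n).+2 = (u + v) %% n)%N).
move: (u : nat) (v : nat) => a b; by rewrite Zp_cast.
Qed.

Lemma had_sum (p q : nat) (z : algC) (M : 'M['Z_(p * q)]_(p + q)) (a b : 'I_(p + q)) :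
  prime p -> prime q -> (p * q)%N.-primitive_root z -> hadamard_log z M -> a != b ->
  \sum_(x < p + q) z ^+ (Ldiff M a b x) = 0.
Proof.
move=> pp pq hz hM ab.
have n1 : (1 < p * q)%N by have := prime_gt1 pp; have := prime_gt1 pq; nia.
have nz : `|z| = 1.
  apply/eqP; rewrite -(@pexpr_eq1 _ _ (p * q)%N) ?normr_ge0 //; last by lia.
  by rewrite -normrX (prim_expr_order hz) normr1.
rewrite -[RHS](hM b a); last by rewrite eq_sym.
apply: eq_bigr => x _.
have -> : M b x = Ldiff M a b x + M a x by rewrite /Ldiff subrK.
rewrite expZ_add // -mulrA -normCK normrX nz !expr1n mulr1 //.
Qed.

Lemma valZ_add (n : nat) (u v : 'Z_n) : (1 < n)%N ->
  (nat_of_ord (u + v)%R = (u + v) %% n)%N.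
Proof.
move=> n1; change ((((u : nat) + v) %% (Zp_trunc n).+2 = (u + v) %% n)%N).
move: (u : nat) (v : nat) => a b; by rewrite Zp_cast.
Qed.

Lemma val_multp (p q : nat) (w : 'Z_(p * q)) : (1 < p * q)%N ->
  (nat_of_ord (p%:R * w)%R %% p = 0)%N.
Proof.
move=> n1; change (((p%:R : 'Z_(p * q)) : nat) * w %% (Zp_trunc (p * q)).+2 %% p = 0)%N.
rewrite val_Zp_nat //; move: (w : nat) => a; rewrite Zp_cast //.
by rewrite modn_dvdm ?dvdn_mulr // -modnMml modn_dvdm ?dvdn_mulr // modnn mul0n mod0n.
Qed.

Lemma sum_res_w (p y : nat) : (0 < p)%N ->
  (\sum_(a < p) a * (y == a %[mod p]) = y %% p)%N.
Proof.
move=> p0; have yp : (y %% p < p)%N by rewrite ltn_pmod.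
rewrite (bigD1 (Ordinal yp)) //= modn_mod eqxx muln1 big1 ?addn0 // => g /eqP gne.
case: eqP => h; last by rewrite muln0.
by exfalso; apply: gne; apply: val_inj => /=; rewrite h modn_small.
Qed.

Lemma sum_alpha (p q N : nat) (f : 'I_N -> nat) (a0 : nat) : prime p -> (2 < p)%N ->
  (forall a, #|[set x | f x == a %[mod p]]| = 1 + q * (a == a0 %[mod p]))%N ->
  (\sum_(x < N) f x == q * a0 %[mod p])%N.
Proof.
move=> pp p2 Hc; have p0 := prime_gt0 pp.
rewrite -modn_summ.
rewrite (eq_bigr (fun x => \sum_(a < p) a * (f x == a %[mod p]))%N); last by move=> x _; rewrite sum_res_w.
rewrite exchange_big /=.
rewrite (eq_bigr (fun a : 'I_p => a * (1 + q * (a == a0 %[mod p])))%N); last first.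
  by move=> a _; rewrite -big_distrr /= sum_ind_card Hc.
rewrite (eq_bigr (fun a : 'I_p => a + q * (a * (a0 == a %[mod p])))%N); last first.
  by move=> a _; rewrite mulnDr muln1 mulnCA eq_sym.
rewrite big_split /= -big_distrr /= sum_res_w //.
have : (p %| \sum_(a < p) a)%N.
  by rewrite -(big_mkord xpredT (fun a => a)) bin2_sum prime_dvd_bin.
move=> /dvdnP [c ->]; by rewrite modnMDl modnMmr.
Qed.

Lemma key_mod (p q u v w a1 a2 a3 b1 b3 : nat) :
  (w == u + v %[mod p])%N -> (w == u + v %[mod q])%N -> (a3 == a1 + a2 %[mod p])%N ->
  ~~ (u == a1 %[mod p])%N -> (v == a2 %[mod p])%N ->
  (u == a1 %[mod p])%N || (u == b1 %[mod q])%N ->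
  (w == a3 %[mod p])%N || (w == b3 %[mod q])%N ->
  (v + b1 == b3 %[mod q])%N.
Proof.
move=> /eqP wp /eqP wq /eqP a3p ua /eqP va.
rewrite (negbTE ua) /= => /eqP ub.
have wa : ~~ (w == a3 %[mod p])%N.
  apply: contra ua; rewrite wp a3p => /eqP h.
  by rewrite -(eqn_modDr a2); apply/eqP; rewrite -modnDmr -va modnDmr h.
rewrite (negbTE wa) /= => /eqP wb.
by apply/eqP; rewrite -wb wq -[RHS]modnDml ub modnDml addnC.
Qed.

Lemma F1 (p q N : nat) (f : 'I_N -> nat) (a0 b0 : nat) :
  (forall a b, #|[set x | (f x == a %[mod p]) && (f x == b %[mod q])]| =
     (a == a0 %[mod p]) + (b == b0 %[mod q]))%N ->
  forall x, (f x == a0 %[mod p])%N || (f x == b0 %[mod q])%N.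
Proof.
move=> H x; have : (0 < #|[set y | (f y == f x %[mod p]) && (f y == f x %[mod q])]|)%N.
  by apply/card_gt0P; exists x; rewrite inE !eqxx.
by rewrite H; case: (f x == a0 %[mod p])%N; case: (f x == b0 %[mod q])%N.
Qed.

Lemma imQ (p q : nat) (u r : 'Z_(p * q)) : (1 < p * q)%N ->
  u \in [set r + x | x in multiples (p * q) p] -> ((u : nat) == r %[mod p])%N.
Proof.
move=> n1 /imsetP [y /imsetP [w _ ->] ->].
by rewrite valZ_add // modn_dvdm ?dvdn_mulr // -modnDmr val_multp // addn0.
Qed.





Lemma AP (p q : nat) (M : 'M['Z_(p * q)]_(p + q)) (a b : 'I_(p + q))
    (P Q R : {set 'I_(p + q)}) (r : 'Z_(p * q)) (a0 : nat) :
    (1 < p * q)%N -> (1 < q)%N ->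
    (forall c, #|[set x | nat_of_ord (Ldiff M a b x) == c %[mod p]]| = 1 + q * (c == a0 %[mod p]))%N ->
    P :|: Q :|: R = setT -> [disjoint Q & R] -> #|R| = 2%N ->
    (forall k, k \in R -> Ldiff M a b k = r) -> #|Q| = q.-1 ->
    [set Ldiff M a b k | k in Q] = [set r + x | x in multiples (p * q) p] :\ r ->
    forall x, ~~ (nat_of_ord (Ldiff M a b x) == a0 %[mod p])%N -> x \in P.
Proof.
move=> n1 q1 Ha Hcov dQR cR HR cQ HQ.
have QRsub : Q :|: R \subset [set x | nat_of_ord (Ldiff M a b x) == r %[mod p]].
  apply/subsetP => x; rewrite !inE => /orP [xQ|xR].
    have : Ldiff M a b x \in [set Ldiff M a b k | k in Q] by apply: imset_f.
    by rewrite HQ => /setD1P [_ h]; apply: imQ n1 h.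
  by rewrite HR.
have cQR : #|Q :|: R| = q.+1.
  rewrite cardsU (disjoint_setI0 dQR) cards0 cQ cR subn0.
  by rewrite addn2 prednK // ltnW.
have ra : (r == a0 %[mod p])%N.
  have := subset_leq_card QRsub; rewrite cQR Ha.
  case: (r == a0 %[mod p])%N => //=; rewrite muln0 addn0 ltnS.
  by move=> /(leq_trans q1).
move=> x hx; have : x \in P :|: Q :|: R by rewrite Hcov inE.
rewrite -setUA inE => /orP [//|xQR]; exfalso; move/negP: hx; apply.
have := (subsetP QRsub) x xQR; rewrite inE => /eqP ->.
exact: ra.
Qed.

Theorem lemma6p4 (p q : nat) (hp : prime p) (hq : prime q) (hpq : p != q)
    (hp5 : (5 <= p)%N) (z : algC) (hz : (p * q)%N.-primitive_root z)
    (M : 'M['Z_(p * q)]_(p + q)) (hM : hadamard_log z M)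
    (i j k : 'I_(p + q)) (hij : i != j) (hjk : j != k) (hik : i != k)
    (Pij Qij Rij : {set 'I_(p + q)}) (rij : 'Z_(p * q))
    (Pjk Qjk Rjk : {set 'I_(p + q)}) (rjk : 'Z_(p * q))
    (hPij : PQR_partition M i j Pij Qij Rij rij)
    (hPjk : PQR_partition M j k Pjk Qjk Rjk rjk) :
  (2 <= #|Pij :&: Pjk|)%N.
Proof.
have p1 := prime_gt1 hp; have q1 := prime_gt1 hq.
have n1 : (1 < p * q)%N by nia.
have cpq : coprime p q by rewrite prime_coprime // dvdn_prime2.
pose fij x := nat_of_ord (Ldiff M i j x).
pose fjk x := nat_of_ord (Ldiff M j k x).
pose fik x := nat_of_ord (Ldiff M i k x).
have [a1 [b1 [H1a H1b]]] := @structure p q (p + q) z fij hp hq hpq hz erefl (had_sum hp hq hz hM hij).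
have [a2 [b2 [H2a H2b]]] := @structure p q (p + q) z fjk hp hq hpq hz erefl (had_sum hp hq hz hM hjk).
have [a3 [b3 [H3a H3b]]] := @structure p q (p + q) z fik hp hq hpq hz erefl (had_sum hp hq hz hM hik).
have hadd : forall x, (fik x = (fij x + fjk x) %% (p * q))%N.
  move=> x; rewrite /fik /fij /fjk -valZ_add //; congr nat_of_ord.
  by rewrite /Ldiff; ring.
have addp : forall x, (fik x == fij x + fjk x %[mod p])%N.
  by move=> x; rewrite hadd modn_dvdm ?dvdn_mulr.
have addq : forall x, (fik x == fij x + fjk x %[mod q])%N.
  by move=> x; rewrite hadd modn_dvdm ?dvdn_mull.
have a3e : (a3 == a1 + a2 %[mod p])%N.
  rewrite -(modn_cancel _ _ cpq).
  have s3 := sum_alpha hp (leq_trans (isT : 2 < 5)%N hp5) H3a.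
  have s1 := sum_alpha hp (leq_trans (isT : 2 < 5)%N hp5) H1a.
  have s2 := sum_alpha hp (leq_trans (isT : 2 < 5)%N hp5) H2a.
  rewrite -(eqP s3) mulnDr -modnDm -(eqP s1) -(eqP s2) modnDm -big_split /=.
  rewrite -modn_summ -[in X in _ == X]modn_summ.
  by rewrite (eq_bigr (fun x => (fij x + fjk x) %% p)%N) // => x _; apply/eqP.
case: hPij => [[Hcov1 [_ [_ dQR1]]] [[cR1 HR1] [_ [cQ1 HQ1]]]].
case: hPjk => [[Hcov2 [_ [_ dQR2]]] [[cR2 HR2] [_ [cQ2 HQ2]]]].
have A1P := AP n1 q1 H1a Hcov1 dQR1 cR1 HR1 cQ1 HQ1.
have A2P := AP n1 q1 H2a Hcov2 dQR2 cR2 HR2 cQ2 HQ2.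
pose A1 := [set x | ~~ (fij x == a1 %[mod p])%N].
pose A2 := [set x | ~~ (fjk x == a2 %[mod p])%N].
have cA1 : #|A1| = p.-1.
  have := cardsC [set x | (fij x == a1 %[mod p])%N]; rewrite H1a eqxx card_ord.
  rewrite (_ : ~: _ = A1); first by lia.
  by apply/setP => x; rewrite !inE.
have key : (#|A1 :\: A2| <= 2)%N.
  case: (set_0Vmem (A1 :\: A2)) => [->|[x0 hx0]]; first by rewrite cards0.
  have C : forall y, y \in A1 :\: A2 -> (fjk y + b1 == b3 %[mod q])%N.
    move=> y; rewrite !inE negbK => /andP [hy2 hy1].
    exact: (key_mod (addp y) (addq y) a3e hy1 hy2 (F1 H1b y) (F1 H3b y)).
  apply: leq_trans (subset_leq_card (_ : A1 :\: A2 \subset [set y | (fjk y == a2 %[mod p]) && (fjk y == fjk x0 %[mod q])])) _.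
    apply/subsetP => y hy; rewrite inE; move: (hy); rewrite !inE negbK => /andP [-> _] /=.
    rewrite -(eqn_modDr b1); apply/eqP; rewrite (eqP (C y hy)) -(eqP (C x0 hx0)) //.
  by rewrite H2b; case: (a2 == a2 %[mod p])%N; case: (fjk x0 == b2 %[mod q])%N.
have := cardsID A2 A1; rewrite cA1 => hc.
have sub : A1 :&: A2 \subset Pij :&: Pjk.
  apply/subsetP => x; rewrite !inE => /andP [h1 h2].
  by rewrite (A1P x h1) (A2P x h2).
have h2 : (2 <= #|A1 :&: A2|)%N.
  move: hc key hp5; set u := #|A1 :&: A2|; set v := #|A1 :\: A2|; move=> hc key hp5'.
  have : (p.-1 = p - 1)%N by rewrite subn1.
  lia.
exact: leq_trans h2 (subset_leq_card sub).
Qed.
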